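(* Let $\mathcal{A}=(A,\{\to_{1,\alpha}\}_{\alpha\in I})$ and $\mathcal{B}=(A,\{\to_{2,\beta}\}_{\beta\in I})$ be $I$-indexed ARSs on the same set $A$, and let $>$ be a well-founded order on $I$ having a least element $\bot$. Suppose $\to_{1,\bot}$ and $\to_{2,\bot}$ commute. If every local peak $b\;{}_{1,\alpha}\!\!\leftarrow a\to_{2,\beta} c$ with $(\alpha,\beta)\in I^2\setminus\{(\bot,\bot)\}$ is decreasing, then $\mathcal{A}$ and $\mathcal{B}$ commute.
   Context: An $I$-indexed abstract rewrite system (ARS) is a pair $(A,\{\to_\alpha\}_{\alpha\in I})$ of a set and a family of binary relations on it; $\to_\mathcal{A}$ is the union of all its relations. Relations $\to_1,\to_2$ commute if ${}_1\!\!\leftarrow^*\cdot\to_2^*\;\subseteq\;\to_2^*\cdot{}_1\!\!\leftarrow^*$; ARSs $\mathcal{A},\mathcal{B}$ commute if $\to_\mathcal{A}$ and $\to_\mathcal{B}$ commute. For $\alpha\in I$, $\curlyvee\alpha=\{\gamma\in I\mid\alpha>\gamma\}$ and $\curlyvee\alpha\beta=\curlyvee\alpha\cup\curlyvee\beta$. For $K\subseteq I$, $\leftrightarrow_K$ is the union of ${}_{1,\gamma}\!\!\leftarrow$ and $\to_{2,\gamma}$ over $\gamma\in K$. A local peak $b\;{}_{1,\alpha}\!\!\leftarrow a\to_{2,\beta} c$ is decreasing if $b\leftrightarrow^*_{\curlyvee\alpha}\cdot\to^=_{2,\beta}\cdot\leftrightarrow^*_{\curlyvee\alpha\beta}\cdot{}_{1,\alpha}\!\!\leftarrow^=\cdot\leftrightarrow^*_{\curlyvee\beta}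 c$, where $\to^=$ denotes the reflexive closure. *)

(* Defs.v *)
From Stdlib Require Import Relations.

Definition ARS (I A : Type) := I -> relation A.

Definition ars_union {I A : Type} (R : ARS I A) : relation A :=
  fun x y => exists alpha, R alpha x y.

Definition rcomp {A : Type} (R S : relation A) : relation A :=
  fun x z => exists y, R x y /\ S y z.

Definition rinv {A : Type} (R : relation A) : relation A := fun x y => R y x.

Definition rrefl {A : Type} (R : relation A) : relation A :=
  fun x y => x = y \/ R x y.

Definition commute {A : Type} (R1 R2 : relation A) : Prop :=
  forall a b c, clos_refl_trans A R1 a b -> clos_refl_trans A R2 a c ->
    exists d, clos_refl_trans A R2 b d /\ clos_refl_trans A R1 c d.

Definition ars_commute {I A : Type} (R1 R2 : ARS I A) : Prop :=
  commute (ars_union R1) (ars_union R2).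

Section Decreasing.
Context {I A : Type} (gt : I -> I -> Prop) (R1 R2 : ARS I A).

Definition below (alpha : I) : I -> Prop := fun gamma => gt alpha gamma.
Definition below2 (alpha beta : I) : I -> Prop :=
  fun gamma => gt alpha gamma \/ gt beta gamma.

Definition conv_K (K : I -> Prop) : relation A :=
  fun x y => exists gamma, K gamma /\ (R1 gamma y x \/ R2 gamma x y).

Definition decreasing_peak (alpha beta : I) (b c : A) : Prop :=
  rcomp (clos_refl_trans A (conv_K (below alpha)))
   (rcomp (rrefl (R2 beta))
    (rcomp (clos_refl_trans A (conv_K (below2 alpha beta)))
     (rcomp (rinv (rrefl (R1 alpha)))
            (clos_refl_trans A (conv_K (below beta)))))) b c.
End Decreasing.

(* Main.v *)
Require Import Defs.
From Stdlib Require Import Relations List Permutation ClassicalEpsilon Classical Wellfounded.Transitive_Closure.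
Import ListNotations.

Section Dev.
Variable I : Type.
Variable gt : I -> I -> Prop.
Hypothesis gt_trans : forall x y z, gt x y -> gt y z -> gt x z.
Hypothesis gt_wf : well_founded (fun x y => gt y x).
Definition lt (x y : I) : Prop := gt y x.
Lemma lt_trans : forall x y z, lt x y -> lt y z -> lt x z.
Proof. unfold lt; eauto. Qed.
Lemma lt_wf : well_founded lt.
Proof. exact gt_wf. Qed.
Local Hint Resolve lt_trans : core.

Definition keep (D : I -> Prop) (l : list I) : list I :=
  filter (fun x => if excluded_middle_informative (D x) then false else true) l.

Lemma keep_In D l x : In x (keep D l) <-> In x l /\ ~ D x.
Proof.
  unfold keep. rewrite filter_In.
  destruct (excluded_middle_informative (D x)); intuition congruence.
Qed.

Lemma keep_app D l1 l2 : keep D (l1 ++ l2) = keep D l1 ++ keep D l2.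
Proof. unfold keep. apply filter_app. Qed.

Lemma keep_ext_in D E l : (forall x, In x l -> (D x <-> E x)) -> keep D l = keep E l.
Proof.
  induction l as [|a l IH]; intros H; simpl; auto.
  unfold keep in *; simpl.
  destruct (excluded_middle_informative (D a)), (excluded_middle_informative (E a));
   try (exfalso; firstorder; fail); rewrite IH; firstorder.
Qed.

Lemma keep_keep D E l : keep D (keep E l) = keep (fun x => D x \/ E x) l.
Proof.
  induction l as [|a l IH]; simpl; auto.
  unfold keep in *; simpl.
  destruct (excluded_middle_informative (E a)); simpl;
  destruct (excluded_middle_informative (D a \/ E a)); simpl; try (exfalso; tauto).
  - exact IH.
  - destruct (excluded_middle_informative (D a)); simpl; [exact IH| exfalso; tauto].
  - destruct (excluded_middle_informative (D a)); simpl; [exfalso; tauto| f_equal; exact IH].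
Qed.

Lemma keep_all D l : (forall x, In x l -> D x) -> keep D l = [].
Proof.
  induction l as [|a l IH]; intros H; simpl; auto.
  unfold keep in *; simpl.
  destruct (excluded_middle_informative (D a)); [apply IH; firstorder | exfalso; firstorder].
Qed.

Lemma keep_none D l : (forall x, In x l -> ~ D x) -> keep D l = l.
Proof.
  induction l as [|a l IH]; intros H; simpl; auto.
  unfold keep in *; simpl.
  destruct (excluded_middle_informative (D a)); [exfalso; firstorder | f_equal; apply IH; firstorder].
Qed.

Lemma keep_cons_in D a l : D a -> keep D (a :: l) = keep D l.
Proof. intros H; unfold keep; simpl. destruct (excluded_middle_informative (D a)); tauto. Qed.
Lemma keep_cons_out D a l : ~ D a -> keep D (a :: l) = a :: keep D l.
Proof. intros H; unfold keep; simpl. destruct (excluded_middle_informative (D a)); tauto. Qed.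

Lemma keep_perm D l l' : Permutation l l' -> Permutation (keep D l) (keep D l').
Proof.
  induction 1; unfold keep in *; simpl; auto.
  - destruct (excluded_middle_informative (D x)); auto.
  - destruct (excluded_middle_informative (D x)), (excluded_middle_informative (D y)); auto.
    constructor.
  - eapply perm_trans; eauto.
Qed.

Lemma keep_split D l : Permutation l (keep D l ++ keep (fun x => ~ D x) l).
Proof.
  induction l as [|a l IH]; simpl; auto.
  unfold keep in *; simpl.
  destruct (excluded_middle_informative (D a)), (excluded_middle_informative (~ D a)); try tauto; simpl.
  - apply Permutation_cons_app. exact IH.
  - constructor. exact IH.
Qed.

(* multisets *)
Definition mult1 (N M : list I) : Prop :=
  exists a M0 K, Permutation M (a :: M0) /\ Permutation N (K ++ M0) /\
    (forall k, In k K -> lt k a).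

Definition mlt := clos_trans _ mult1.
Definition mle N M := Permutation N M \/ mlt N M.

Lemma mult1_perm N N' M M' : Permutation N N' -> Permutation M M' -> mult1 N M -> mult1 N' M'.
Proof.
  intros HN HM [a [M0 [K [H1 [H2 H3]]]]]. exists a, M0, K. split; [|split]; auto.
  - eapply perm_trans; [apply Permutation_sym; eauto| auto].
  - eapply perm_trans; [apply Permutation_sym; eauto| auto].
Qed.

Lemma mlt_perm N N' M M' : Permutation N N' -> Permutation M M' -> mlt N M -> mlt N' M'.
Proof.
  intros HN HM H. revert N' M' HN HM. induction H; intros N' M' HN HM.
  - apply t_step. eapply mult1_perm; eauto.
  - eapply t_trans; [apply IHclos_trans1; eauto | apply IHclos_trans2; eauto].
Qed.

Lemma mle_perm N N' M M' : Permutation N N' -> Permutation M M' -> mle N M -> mle N' M'.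
Proof.
  intros HN HM [H|H]; [left|right].
  - eapply perm_trans; [apply Permutation_sym; eauto|]. eapply perm_trans; eauto.
  - eapply mlt_perm; eauto.
Qed.

Lemma mlt_mle_trans A B C : mlt A B -> mle B C -> mlt A C.
Proof. intros H [H'|H']. eapply mlt_perm; eauto. eapply t_trans; eauto. Qed.
Lemma mle_mlt_trans A B C : mle A B -> mlt B C -> mlt A C.
Proof. intros [H|H] H'. eapply mlt_perm; [apply Permutation_sym; eauto|apply Permutation_refl|eauto]. eapply t_trans; eauto. Qed.
Lemma mle_trans A B C : mle A B -> mle B C -> mle A C.
Proof.
  intros [H|H] H'. eapply mle_perm; [apply Permutation_sym; eauto|apply Permutation_refl|eauto].
  right. eapply mlt_mle_trans; eauto.
Qed.
Lemma mle_refl A : mle A A. Proof. left; auto. Qed.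

Lemma mult1_app_l Z N M : mult1 N M -> mult1 (Z ++ N) (Z ++ M).
Proof.
  intros [a [M0 [K [H1 [H2 H3]]]]]. exists a, (Z ++ M0), K. split; [|split]; auto.
  - eapply perm_trans; [apply Permutation_app_head; eauto|]. apply Permutation_sym, Permutation_middle.
  - eapply perm_trans; [apply Permutation_app_head; eauto|].
    rewrite !app_assoc. apply Permutation_app_tail. apply Permutation_app_comm.
Qed.

Lemma mlt_app_l Z N M : mlt N M -> mlt (Z ++ N) (Z ++ M).
Proof. induction 1. apply t_step, mult1_app_l; auto. eapply t_trans; eauto. Qed.

Lemma mlt_app_r Z N M : mlt N M -> mlt (N ++ Z) (M ++ Z).
Proof.
  intros H. eapply mlt_perm; [apply Permutation_app_comm|apply Permutation_app_comm|].
  apply mlt_app_l; auto.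
Qed.

Lemma mle_app A B C D : mle A B -> mle C D -> mle (A ++ C) (B ++ D).
Proof.
  intros H1 H2. apply mle_trans with (B ++ C).
  - destruct H1 as [H1|H1]; [left; apply Permutation_app_tail; auto | right; apply mlt_app_r; auto].
  - destruct H2 as [H2|H2]; [left; apply Permutation_app_head; auto | right; apply mlt_app_l; auto].
Qed.

Lemma mlt_app1 A B C D : mlt A B -> mle C D -> mlt (A ++ C) (B ++ D).
Proof.
  intros H1 H2. apply mlt_mle_trans with (B ++ C).
  - apply mlt_app_r; auto.
  - destruct H2 as [H2|H2]; [left; apply Permutation_app_head; auto | right; apply mlt_app_l; auto].
Qed.

Lemma mlt_app2 A B C D : mle A B -> mlt C D -> mlt (A ++ C) (B ++ D).
Proof.
  intros H1 H2. eapply mlt_perm; [apply Permutation_app_comm|apply Permutation_app_comm|].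
  apply mlt_app1; auto.
Qed.

Lemma mle_app_r A B : mle A (A ++ B).
Proof.
  induction B as [|b B IH].
  - left. rewrite app_nil_r. auto.
  - apply mle_trans with (A ++ B); auto. right. apply t_step.
    exists b, (A ++ B), []. split; [|split].
    + apply Permutation_sym, Permutation_middle.
    + simpl; auto.
    + simpl; tauto.
Qed.

Lemma mle_keep_self D l : mle (keep D l) l.
Proof.
  eapply mle_perm; [apply Permutation_refl| apply Permutation_sym, (keep_split D l)|].
  apply mle_app_r.
Qed.

Lemma mlt_dom K X : X <> [] -> (forall k, In k K -> exists x, In x X /\ lt k x) -> mlt K X.
Proof.
  revert K. induction X as [|x X IH]; intros K Hne H; [congruence|].
  destruct X as [|x' X'].
  - apply t_step. exists x, [], K. split; [|split]; auto.
    + rewrite app_nil_r; auto.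
    + intros k Hk. destruct (H k Hk) as [y [[<-|[]] Hy]]; auto.
  - set (K1 := keep (fun k => ~ lt k x) K). set (K2 := keep (fun k => lt k x) K).
    assert (HK : Permutation K (K2 ++ K1)) by apply keep_split.
    apply mlt_perm with (K1 ++ K2) (x :: x' :: X'); [eapply perm_trans; [apply Permutation_app_comm| apply Permutation_sym; auto]|auto|].
    apply mlt_mle_trans with (K1 ++ x' :: X').
    + apply mlt_app_l. apply IH; [congruence|].
      intros k Hk. unfold K2 in Hk. apply keep_In in Hk. destruct Hk as [Hk Hn].
      destruct (H k Hk) as [y [[<-|Hy] Hl]]; [tauto| eauto].
    + right. apply t_step. exists x, (x' :: X'), K1. split; [|split]; auto.
      intros k Hk. unfold K1 in Hk. apply keep_In in Hk. destruct Hk. apply NNPP; auto.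
Qed.

Definition le x y := x = y \/ lt x y.

Lemma mult1_dom N M : mult1 N M -> forall n, In n N -> exists m, In m M /\ le n m.
Proof.
  intros [a [M0 [K [H1 [H2 H3]]]]] n Hn.
  apply (Permutation_in _ H2) in Hn. apply in_app_or in Hn. destruct Hn as [Hn|Hn].
  - exists a. split. apply (Permutation_in _ (Permutation_sym H1)); simpl; auto. right; auto.
  - exists n. split. apply (Permutation_in _ (Permutation_sym H1)); simpl; auto. left; auto.
Qed.

Lemma mlt_dom_inv N M : mlt N M -> forall n, In n N -> exists m, In m M /\ le n m.
Proof.
  induction 1; intros n Hn.
  - eapply mult1_dom; eauto.
  - destruct (IHclos_trans1 n Hn) as [m1 [Hm1 Hl1]].
    destruct (IHclos_trans2 m1 Hm1) as [m2 [Hm2 Hl2]].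
    exists m2; split; auto. destruct Hl1 as [<-|Hl1]; auto. destruct Hl2 as [<-|Hl2]; right; eauto.
Qed.

Lemma mle_dom_inv N M : mle N M -> forall n, In n N -> exists m, In m M /\ le n m.
Proof.
  intros [H|H] n Hn. exists n; split; [eapply Permutation_in; eauto| left; auto].
  eapply mlt_dom_inv; eauto.
Qed.

Lemma mlt_single N b : mlt N [b] -> forall n, In n N -> lt n b.
Proof.
  intros H. apply clos_trans_tn1 in H. remember [b] as bb eqn:Hbb. destruct H as [z Hy|y z Hy Hn]; subst z.
  - intros n Hn. destruct Hy as [a [M0 [K [H1 [H2 H3]]]]].
    assert (a = b /\ M0 = []) as [-> ->].
    { apply Permutation_length_1_inv in H1. inversion H1; auto. }
    rewrite app_nil_r in H2. apply H3. eapply Permutation_in; eauto.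
  - intros n Hn'.
    assert (Hz : forall w, In w y -> lt w b).
    { destruct Hy as [a [M0 [K [H1 [H2 H3]]]]].
      assert (a = b /\ M0 = []) as [-> ->].
      { apply Permutation_length_1_inv in H1. inversion H1; auto. }
      rewrite app_nil_r in H2. intros w Hw; apply H3. eapply Permutation_in; eauto. }
    apply clos_tn1_trans in Hn.
    destruct (mlt_dom_inv _ _ Hn n Hn') as [m [Hm [<-|Hl]]]; auto. eauto.
Qed.

Lemma mle_single N b : mle N [b] -> Permutation N [b] \/ (forall n, In n N -> lt n b).
Proof. intros [H|H]; [left; auto| right; eapply mlt_single; eauto]. Qed.

Lemma mle_keep D A B : (forall x y, D x -> lt y x -> D y) -> mle A B -> mle (keep D A) (keep D B).
Proof.
  intros HD [H|H]. left; apply keep_perm; auto.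
  induction H.
  - destruct H as [a [M0 [K [H1 [H2 H3]]]]].
    apply keep_perm with (D := D) in H1. apply keep_perm with (D := D) in H2.
    rewrite keep_app in H2.
    destruct (excluded_middle_informative (D a)) as [Ha|Ha].
    + rewrite keep_all with (l := K) in H2 by (intros k Hk; eauto).
      rewrite keep_cons_in in H1 by auto.
      left. simpl in H2. eapply perm_trans; eauto. apply Permutation_sym; auto.
    + rewrite keep_cons_out in H1 by auto.
      right. apply t_step. exists a, (keep D M0), (keep D K). split; [|split]; auto.
      intros k Hk. apply keep_In in Hk. apply H3; tauto.
  - eapply mle_trans; eauto.
Qed.

Lemma acc_perm M M' : Acc mult1 M -> Permutation M M' -> Acc mult1 M'.
Proof.
  intros H HP. constructor. intros N HN. apply H. eapply mult1_perm; [apply Permutation_refl| apply Permutation_sym; eauto| auto].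
Qed.

Lemma less_add N a M0 : mult1 N (a :: M0) ->
  (exists M, mult1 M M0 /\ Permutation N (a :: M)) \/
  (exists K, (forall k, In k K -> lt k a) /\ Permutation N (K ++ M0)).
Proof.
  intros [b [M1 [K [H1 [H2 H3]]]]].
  assert (Ha : In a (b :: M1)) by (eapply Permutation_in; eauto; simpl; auto).
  destruct Ha as [<-|Ha].
  - right. exists K. split; auto. apply Permutation_cons_inv in H1.
    eapply perm_trans; eauto. apply Permutation_app_head. apply Permutation_sym; auto.
  - left. apply in_split in Ha. destruct Ha as [l1 [l2 ->]].
    assert (HM0 : Permutation M0 (b :: l1 ++ l2)).
    { apply Permutation_cons_inv with a. eapply perm_trans; eauto.
      eapply perm_trans; [apply Permutation_cons; [reflexivity| apply Permutation_sym, Permutation_middle]|].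
      constructor. }
    exists (K ++ l1 ++ l2). split.
    + exists b, (l1 ++ l2), K. split; [|split]; auto.
    + eapply perm_trans; eauto.
      eapply perm_trans; [apply Permutation_app_head; apply Permutation_sym, Permutation_middle|].
      apply Permutation_sym, Permutation_middle.
Qed.

Lemma all_acc M0 : Acc mult1 M0 -> forall a,
  (forall b, lt b a -> forall M, Acc mult1 M -> Acc mult1 (b :: M)) -> Acc mult1 (a :: M0).
Proof.
  induction 1 as [M0 HM0 IH]. intros a Ha. constructor. intros N HN.
  destruct (less_add _ _ _ HN) as [[M [H1 H2]]|[K [H1 H2]]].
  - eapply acc_perm; [apply IH; eauto| apply Permutation_sym; auto].
  - eapply acc_perm; [|apply Permutation_sym; eauto].
    clear H2. induction K as [|k K IHK]; simpl.
    + constructor; auto.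
    + apply Ha; [apply H1; simpl; auto|]. apply IHK. intros; apply H1; simpl; auto.
Qed.

Lemma acc_cons a : forall M, Acc mult1 M -> Acc mult1 (a :: M).
Proof.
  induction (lt_wf a) as [a _ IH]. intros M HM. apply all_acc; auto.
Qed.

Lemma mult1_wf : well_founded mult1.
Proof.
  intros M. induction M as [|a M IH].
  - constructor. intros N [a [M0 [K [H1 _]]]]. apply Permutation_nil in H1. discriminate.
  - apply acc_cons; auto.
Qed.

Lemma mlt_wf : well_founded mlt.
Proof. apply wf_clos_trans, mult1_wf. Qed.


Definition down (S : list I) (x : I) : Prop := exists y, In y S /\ lt x y.

Lemma down_cons a s x : down (a :: s) x <-> down [a] x \/ down s x.
Proof. unfold down; simpl; firstorder; subst; eauto. Qed.
Lemma down_single a x : down [a] x <-> lt x a.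
Proof. unfold down; simpl; firstorder; subst; eauto. Qed.
Lemma down_nil x : ~ down [] x.
Proof. unfold down; simpl; firstorder. Qed.
Lemma down_closed s : forall x y, down s x -> lt y x -> down s y.
Proof. unfold down; firstorder eauto. Qed.
Lemma down_in s x y : In y s -> lt x y -> down s x.
Proof. unfold down; eauto. Qed.

Fixpoint lexmax (s : list I) : list I :=
  match s with
  | [] => []
  | a :: s' => a :: keep (down [a]) (lexmax s')
  end.

Lemma keep_down_nil l : keep (down []) l = l.
Proof. apply keep_none. intros x _; apply down_nil. Qed.

Lemma lexmax_app s t : lexmax (s ++ t) = lexmax s ++ keep (down s) (lexmax t).
Proof.
  induction s as [|a s IH]; simpl.
  - rewrite keep_down_nil; auto.
  - rewrite IH, keep_app, keep_keep. f_equal. f_equal.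
    apply keep_ext_in. intros x _. rewrite (down_cons a s x). tauto.
Qed.

Lemma lexmax_incl s x : In x (lexmax s) -> In x s.
Proof.
  induction s as [|a s IH]; simpl; auto.
  intros [H|H]; auto. apply keep_In in H. right; tauto.
Qed.

Lemma lexmax_cover s x : In x s -> In x (lexmax s) \/ exists y, In y (lexmax s) /\ lt x y.
Proof.
  induction s as [|a s IH]; simpl; [tauto|].
  intros [<-|H]; [left; left; auto|].
  destruct (IH H) as [H1|[y [H1 H2]]].
  - destruct (classic (lt x a)).
    + right; exists a; simpl; auto.
    + left; right. apply keep_In. split; auto. rewrite down_single; auto.
  - destruct (classic (lt y a)).
    + right; exists a; simpl; eauto.
    + right; exists y. split; auto. right. apply keep_In. split; auto. rewrite down_single; auto.
Qed.

Lemma inv_bound X Y Y' : mle (keep (down X) (lexmax Y')) (lexmax Y) ->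
  forall z, In z Y' -> down X z \/ exists w, In w Y /\ le z w.
Proof.
  intros H.
  assert (Hk : forall z, In z (lexmax Y') -> down X z \/ exists w, In w Y /\ le z w).
  { intros z Hz. destruct (classic (down X z)) as [Hd|Hd]; [left; auto|right].
    destruct (mle_dom_inv _ _ H z) as [w [Hw Hl]].
    - apply keep_In; auto.
    - exists w; split; auto. apply lexmax_incl; auto. }
  intros z Hz. destruct (lexmax_cover _ _ Hz) as [H1|[y [H1 H2]]]; auto.
  destruct (Hk y H1) as [Hd|[w [Hw [<-|Hl]]]].
  - left. eapply down_closed; eauto.
  - right; exists y; split; auto; right; auto.
  - right; exists w; split; auto; right; eauto.
Qed.

Lemma all_lt_mlt K b : (forall k, In k K -> lt k b) -> mlt K [b].
Proof. intros H. apply mlt_dom; [congruence|]. intros k Hk; exists b; simpl; auto. Qed.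

Lemma all_D2_mlt K a b : (forall k, In k K -> lt k a \/ lt k b) -> mlt K [a; b].
Proof.
  intros H. apply mlt_dom; [congruence|]. intros k Hk.
  destruct (H k Hk); [exists a|exists b]; simpl; auto.
Qed.

Lemma keep_sub D E l : (forall x, D x -> E x) -> mle (keep E l) (keep D l).
Proof.
  intros H. rewrite <- (keep_ext_in (fun x => E x \/ D x) E).
  - rewrite <- keep_keep. apply mle_keep_self.
  - intros x _; firstorder.
Qed.

Lemma down_single_closed a : forall x y, down [a] x -> lt y x -> down [a] y.
Proof. apply down_closed. Qed.

Lemma keep_in_lt D l x : In x (keep (fun y => ~ D y) l) -> D x.
Proof. intros H. apply keep_In in H. apply NNPP; tauto. Qed.

Lemma G a b L1 L2 : mle (keep (down [a]) (lexmax L1)) [b] ->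
  (forall x, In x L2 -> lt x a \/ lt x b) ->
  mle (keep (down [a]) (lexmax (L1 ++ L2))) [b].
Proof.
  intros H1 H2. rewrite lexmax_app, keep_app.
  destruct (mle_single _ _ H1) as [HP|Hlt].
  - assert (Hb : In b L1).
    { apply lexmax_incl. assert (In b (keep (down [a]) (lexmax L1))).
      { eapply Permutation_in; [apply Permutation_sym; eauto| simpl; auto]. }
      apply keep_In in H; tauto. }
    rewrite keep_keep, (keep_all _ (lexmax L2)).
    + rewrite app_nil_r. left; auto.
    + intros x Hx. apply lexmax_incl in Hx. destruct (H2 x Hx).
      * left; apply down_single; auto.
      * right; eapply down_in; eauto.
  - right. apply all_lt_mlt. intros k Hk. apply in_app_or in Hk. destruct Hk as [Hk|Hk]; auto.
    rewrite keep_keep in Hk. apply keep_In in Hk. destruct Hk as [Hk Hn].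
    apply lexmax_incl in Hk. destruct (H2 k Hk); auto.
    exfalso; apply Hn; left; apply down_single; auto.
Qed.

Lemma LemL a b U1 U4 U6 V1 B U2 :
  (forall x, In x U1 -> lt x a) -> (forall x, In x V1 -> lt x a) ->
  mle (keep (down V1) (lexmax U4)) (lexmax (B ++ U2)) ->
  (B = [] \/ B = [b]) ->
  (forall x, In x U2 -> lt x a \/ lt x b) -> (forall x, In x U6 -> lt x a \/ lt x b) ->
  mle (keep (down [a]) (lexmax (U1 ++ U4 ++ U6))) [b].
Proof.
  intros HU1 HV1 H4 HB HU2 HU6. rewrite app_assoc. apply G; auto.
  rewrite lexmax_app, keep_app.
  rewrite (keep_all _ (lexmax U1)).
  2:{ intros x Hx; apply down_single; apply HU1; apply lexmax_incl; auto. }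
  simpl. rewrite keep_keep.
  rewrite (keep_ext_in (fun x => down [a] x \/ down U1 x) (down [a])).
  2:{ intros x _. split; [|tauto]. intros [H|[y [Hy Hl]]]; auto. apply down_single. eauto. }
  rewrite <- (keep_ext_in (fun x => down [a] x \/ down V1 x) (down [a])).
  2:{ intros x _. split; [|tauto]. intros [H|[y [Hy Hl]]]; auto. apply down_single. eauto. }
  rewrite <- keep_keep.
  eapply mle_trans; [apply mle_keep; [apply down_closed| exact H4]|].
  apply G; auto.
  destruct HB as [->| ->].
  - right. apply all_lt_mlt. simpl. tauto.
  - change (lexmax [b]) with [b]. apply mle_keep_self.
Qed.
Lemma perm_swap_mid (A1 B1 C1 D1 : list I) :
  Permutation ((A1 ++ B1) ++ (C1 ++ D1)) (A1 ++ (C1 ++ (B1 ++ D1))).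
Proof.
  rewrite <- app_assoc. apply Permutation_app_head.
  rewrite !app_assoc. apply Permutation_app_tail. apply Permutation_app_comm.
Qed.

Lemma lexmax_cons a s : lexmax (a :: s) = a :: keep (down [a]) (lexmax s).
Proof. reflexivity. Qed.

Lemma LemC a b X1 Y1 P P' X1' Y1' Y2 Q :
  mle (keep (down [a]) (lexmax P)) [b] ->
  mle (keep (down [b]) (lexmax Q)) [a] ->
  mle (keep (down X1) (lexmax P')) (lexmax P) ->
  mle (keep (down P) (lexmax X1')) (lexmax X1) ->
  mle (keep (down X1') (lexmax Y2)) (lexmax Y1') ->
  mle (keep (down Q) (lexmax Y1')) (lexmax Y1) ->
  mle (keep (down (a :: X1)) (lexmax (P' ++ Y2))) (lexmax (b :: Y1)).
Proof.
  intros h0 h0' h1 h5 h3 h4.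
  assert (FP : forall p, In p P -> lt p a \/ le p b).
  { intros p Hp. destruct (inv_bound [a] [b] P h0 p Hp) as [H|[w [[<-|[]] Hw]]].
    - left; apply down_single; auto.
    - right; auto. }
  assert (FQ : forall q, In q Q -> lt q b \/ le q a).
  { intros q Hq. destruct (inv_bound [b] [a] Q h0' q Hq) as [H|[w [[<-|[]] Hw]]].
    - left; apply down_single; auto.
    - right; auto. }
  assert (FX : forall z, In z X1' -> down P z \/ exists w, In w X1 /\ le z w)
    by (apply inv_bound; auto).
  set (Dx := down (a :: X1)).
  assert (HDx : forall x, Dx x <-> lt x a \/ down X1 x).
  { intros x; unfold Dx; rewrite down_cons, down_single; tauto. }
  set (T := keep Dx (lexmax P')).
  assert (HT : mle T [b]).
  { unfold T. rewrite (keep_ext_in _ (fun x => down [a] x \/ down X1 x)).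
    2:{ intros x _; rewrite HDx, down_single; tauto. }
    rewrite <- keep_keep. eapply mle_trans; [apply mle_keep; [apply down_closed|exact h1]|]. auto. }
  set (R := keep Dx (keep (down P') (lexmax Y2))).
  set (E' := fun x => down [b] x \/ Dx x).
  assert (HE'c : forall x y, E' x -> lt y x -> E' y).
  { intros x y [H|H] Hl; [left; eapply down_closed; eauto| right; unfold Dx in *; eapply down_closed; eauto]. }
  assert (CR : mle (keep (down [b]) R) (keep (down [b]) (lexmax Y1))).
  { unfold R. rewrite !keep_keep.
    eapply mle_trans; [apply (keep_sub E')|].
    { intros x [H|H]; tauto. }
    rewrite (keep_ext_in E' (fun x => E' x \/ down X1' x)).
    2:{ intros x _. split; [tauto|]. intros [H|[z [Hz Hl]]]; auto.
        destruct (FX z Hz) as [[p [Hp Hl2]]|[w [Hw Hl2]]].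
        - destruct (FP p Hp) as [H3|[<-|H3]].
          + right. apply HDx. left. eauto.
          + left. apply down_single. eauto.
          + left. apply down_single. eauto.
        - right. apply HDx. right. destruct Hl2 as [<-|Hl2]; eapply down_in; eauto. }
    rewrite <- keep_keep.
    eapply mle_trans; [apply mle_keep; [exact HE'c| exact h3]|].
    rewrite (keep_ext_in E' (fun x => E' x \/ down Q x)).
    2:{ intros x _. split; [tauto|]. intros [H|[q [Hq Hl]]]; auto.
        destruct (FQ q Hq) as [H3|[<-|H3]].
        - left. apply down_single. eauto.
        - right. apply HDx. left. auto.
        - right. apply HDx. left. eauto. }
    rewrite <- keep_keep.
    eapply mle_trans; [apply mle_keep; [exact HE'c| exact h4]|].
    apply keep_sub. intros x H; left; auto. }
  set (Rcut := keep (down [b]) R). set (Rin := keep (fun x => ~ down [b] x) R).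
  assert (HTR : mle (T ++ Rin) [b]).
  { destruct (mle_single _ _ HT) as [HP|Hlt].
    - assert (Hb : In b P').
      { apply lexmax_incl. assert (In b T) by (eapply Permutation_in; [apply Permutation_sym; eauto| simpl; auto]).
        unfold T in H; apply keep_In in H; tauto. }
      assert (Rin = []) as ->.
      { unfold Rin. apply keep_all. intros x Hx Hd. apply down_single in Hd.
        unfold R in Hx. apply keep_In in Hx. destruct Hx as [Hx _]. apply keep_In in Hx.
        destruct Hx as [_ Hx]. apply Hx. eapply down_in; eauto. }
      rewrite app_nil_r. left; auto.
    - right. apply all_lt_mlt. intros k Hk. apply in_app_or in Hk. destruct Hk as [Hk|Hk]; auto.
      apply keep_in_lt in Hk. apply down_single; auto. }
  rewrite lexmax_app, keep_app. fold T. fold R.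
  rewrite lexmax_cons.
  eapply mle_perm; [| apply Permutation_refl|].
  2:{ apply (mle_app (T ++ Rin) [b] Rcut); [exact HTR| exact CR]. }
  rewrite <- app_assoc. apply Permutation_app_head.
  eapply perm_trans; [apply Permutation_app_comm| apply Permutation_sym, keep_split].
Qed.

Lemma Meas2 a b X1 Y1 P :
  mle (keep (down [a]) (lexmax P)) [b] ->
  mlt (lexmax X1 ++ lexmax P) (lexmax (a :: X1) ++ lexmax (b :: Y1)).
Proof.
  intros h0. rewrite !lexmax_cons.
  set (kX := keep (down [a]) (lexmax X1)). set (Xin := keep (fun x => ~ down [a] x) (lexmax X1)).
  set (kP := keep (down [a]) (lexmax P)). set (Pin := keep (fun x => ~ down [a] x) (lexmax P)).
  set (rest := keep (down [b]) (lexmax Y1)).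
  apply mlt_perm with (kX ++ (kP ++ (Xin ++ Pin))) (kX ++ ((b :: rest) ++ [a])).
  - eapply perm_trans; [|apply Permutation_app; apply Permutation_sym;
      [apply (keep_split (down [a]) (lexmax X1))| apply (keep_split (down [a]) (lexmax P))]].
    fold kX Xin kP Pin. apply Permutation_sym, perm_swap_mid.
  - apply Permutation_sym. rewrite app_assoc. simpl. apply Permutation_cons_append.
  - apply mlt_app2; [apply mle_refl|]. apply mlt_app2.
    + apply mle_trans with [b]; auto. apply (mle_app_r [b] rest).
    + apply all_lt_mlt. intros k Hk. apply in_app_or in Hk.
      destruct Hk as [Hk|Hk]; apply keep_in_lt in Hk; apply down_single; auto.
Qed.
Lemma FP_of a b P : mle (keep (down [a]) (lexmax P)) [b] ->
  forall x, down P x -> lt x a \/ lt x b.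
Proof.
  intros h0 x [p [Hp Hl]]. destruct (inv_bound [a] [b] P h0 p Hp) as [H|[w [[<-|[]] [<-|Hw]]]].
  - left; apply down_single in H; eauto.
  - right; auto.
  - right; eauto.
Qed.

Lemma Meas4 a b X1 Y1 P Q X1' Y1' :
  mle (keep (down [a]) (lexmax P)) [b] ->
  mle (keep (down [b]) (lexmax Q)) [a] ->
  mle (keep (down P) (lexmax X1')) (lexmax X1) ->
  mle (keep (down Q) (lexmax Y1')) (lexmax Y1) ->
  mlt (lexmax X1' ++ lexmax Y1') (lexmax (a :: X1) ++ lexmax (b :: Y1)).
Proof.
  intros h0 h0' h5 h4. rewrite !lexmax_cons.
  set (k1 := keep (down P) (lexmax X1')). set (E1 := keep (fun x => ~ down P x) (lexmax X1')).
  set (k2 := keep (down Q) (lexmax Y1')). set (E2 := keep (fun x => ~ down Q x) (lexmax Y1')).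
  set (kX := keep (down [a]) (lexmax X1)). set (Xin := keep (fun x => ~ down [a] x) (lexmax X1)).
  set (kY := keep (down [b]) (lexmax Y1)). set (Yin := keep (fun x => ~ down [b] x) (lexmax Y1)).
  apply mle_mlt_trans with ((k1 ++ k2) ++ (E1 ++ E2)).
  { left. rewrite <- app_assoc. eapply perm_trans.
    - apply Permutation_app; [apply (keep_split (down P) (lexmax X1'))|apply (keep_split (down Q) (lexmax Y1'))].
    - fold k1 E1 k2 E2. apply perm_swap_mid. }
  apply mle_mlt_trans with ((lexmax X1 ++ lexmax Y1) ++ (E1 ++ E2)).
  { apply mle_app; [apply mle_app; auto| apply mle_refl]. }
  apply mlt_perm with ((kX ++ kY) ++ ((Xin ++ Yin) ++ (E1 ++ E2))) ((kX ++ kY) ++ [a; b]).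
  - rewrite app_assoc. apply Permutation_app_tail.
    eapply perm_trans; [|apply Permutation_app; apply Permutation_sym;
      [apply (keep_split (down [a]) (lexmax X1))| apply (keep_split (down [b]) (lexmax Y1))]].
    fold kX Xin kY Yin. rewrite <- app_assoc. apply Permutation_sym, perm_swap_mid.
  - eapply perm_trans; [apply Permutation_app_comm|]. simpl. constructor.
    apply Permutation_middle.
  - apply mlt_app2; [apply mle_refl|]. apply all_D2_mlt.
    intros k Hk. repeat (apply in_app_or in Hk; destruct Hk as [Hk|Hk]);
      apply keep_in_lt in Hk.
    + left; apply down_single; auto.
    + right; apply down_single; auto.
    + eapply FP_of; eauto.
    + destruct (FP_of _ _ _ h0' k Hk); tauto.
Qed.

Lemma MS a b V B U : (forall x, In x V -> lt x a) -> (B = [] \/ B = [b]) ->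
  (forall x, In x U -> lt x a \/ lt x b) -> mlt (lexmax V ++ lexmax (B ++ U)) [a; b].
Proof.
  intros HV HB HU. destruct HB as [->| ->].
  - apply all_D2_mlt. intros k Hk. apply in_app_or in Hk. destruct Hk as [Hk|Hk]; apply lexmax_incl in Hk; auto.
  - simpl. apply t_step. exists a, [b], (lexmax V ++ keep (down [b]) (lexmax U)). split; [|split].
    + auto.
    + rewrite <- app_assoc. apply Permutation_app_head. simpl. apply Permutation_cons_append.
    + intros k Hk. apply in_app_or in Hk. destruct Hk as [Hk|Hk].
      * apply lexmax_incl in Hk; auto.
      * apply keep_In in Hk. destruct Hk as [Hk Hn]. apply lexmax_incl in Hk.
        destruct (HU k Hk); auto. exfalso; apply Hn; apply down_single; auto.
Qed.
Variable A : Type.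
Variables R1 R2 : ARS I A.
Hypothesis Hdec : forall alpha beta a b c, R1 alpha a b -> R2 beta a c ->
  decreasing_peak gt R1 R2 alpha beta b c.

Fixpoint chain (R : I -> A -> A -> Prop) (l : list I) (a b : A) : Prop :=
  match l with
  | [] => a = b
  | x :: l' => exists c, R x a c /\ chain R l' c b
  end.

Lemma chain_app R X Y a b c : chain R X a b -> chain R Y b c -> chain R (X ++ Y) a c.
Proof.
  revert a. induction X as [|x X IH]; simpl; intros a H1 H2.
  - subst; auto.
  - destruct H1 as [e [He H1]]. exists e; split; eauto.
Qed.

Definition meas X Y := lexmax X ++ lexmax Y.
Definition Inv X Y X' Y' := mle (keep (down X) (lexmax Y')) (lexmax Y) /\
                            mle (keep (down Y) (lexmax X')) (lexmax X).
Definition Complete X Y := forall a b c, chain R1 X a b -> chain R2 Y a c ->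
  exists d X' Y', chain R2 Y' b d /\ chain R1 X' c d /\ Inv X Y X' Y'.

Lemma inv_labels (D : I -> Prop) X Y X' Y' : (forall x y, D x -> lt y x -> D y) ->
  Inv X Y X' Y' -> (forall x, In x X -> D x) -> (forall y, In y Y -> D y) ->
  (forall x, In x X' -> D x) /\ (forall y, In y Y' -> D y).
Proof.
  intros HD [H1 H2] HX HY. split.
  - intros z Hz. destruct (inv_bound _ _ _ H2 z Hz) as [[y [Hy Hl]]|[w [Hw [<-|Hl]]]]; eauto.
  - intros z Hz. destruct (inv_bound _ _ _ H1 z Hz) as [[y [Hy Hl]]|[w [Hw [<-|Hl]]]]; eauto.
Qed.

Lemma VAL (D : I -> Prop) (HDc : forall x y, D x -> lt y x -> D y)
  (Hpk : forall X Y, (forall x, In x X -> D x) -> (forall y, In y Y -> D y) -> Complete X Y) :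
  forall x y, clos_refl_trans A (conv_K R1 R2 D) x y ->
  exists z U V, chain R2 U x z /\ chain R1 V y z /\
    (forall u, In u U -> D u) /\ (forall v, In v V -> D v).
Proof.
  induction 1 as [x y [g [Hg [H|H]]]| x | x y w _ IH1 _ IH2].
  - exists x, [], [g]. simpl. repeat split; eauto; intros u Hu; intuition subst; auto.
  - exists y, [g], []. simpl. repeat split; eauto; intros u Hu; intuition subst; auto.
  - exists x, [], []. simpl; repeat split; auto; tauto.
  - destruct IH1 as [z1 [U1 [V1 [HU1 [HV1 [DU1 DV1]]]]]].
    destruct IH2 as [z2 [U2 [V2 [HU2 [HV2 [DU2 DV2]]]]]].
    destruct (Hpk V1 U2 DV1 DU2 y z1 z2 HV1 HU2) as [q [X' [Y' [HY' [HX' Hinv]]]]].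
    destruct (inv_labels D _ _ _ _ HDc Hinv DV1 DU2) as [DX' DY'].
    exists q, (U1 ++ Y'), (V2 ++ X'). repeat split.
    + eapply chain_app; eauto.
    + eapply chain_app; eauto.
    + intros u Hu; apply in_app_or in Hu; destruct Hu; auto.
    + intros u Hu; apply in_app_or in Hu; destruct Hu; auto.
Qed.

Lemma rrefl_chain (R : I -> A -> A -> Prop) g x y : rrefl (R g) x y ->
  exists B, (B = [] \/ B = [g]) /\ chain R B x y.
Proof.
  intros [<-|H]. exists []; simpl; auto. exists [g]; simpl; split; auto. exists y; auto.
Qed.

Lemma StepL alpha beta a1 c1 : decreasing_peak gt R1 R2 alpha beta a1 c1 ->
  (forall X Y, mlt (meas X Y) [alpha; beta] -> Complete X Y) ->
  exists g P Q, chain R2 P a1 g /\ chain R1 Q c1 g /\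
    mle (keep (down [alpha]) (lexmax P)) [beta] /\ mle (keep (down [beta]) (lexmax Q)) [alpha].
Proof.
  intros Hd IHL.
  destruct Hd as [e1 [H1 [e2 [HB [e3 [H2 [e4 [HA H3]]]]]]]].
  set (D2 := fun x => lt x alpha \/ lt x beta).
  assert (HD2c : forall x y, D2 x -> lt y x -> D2 y) by (unfold D2; intros x y [H|H] Hl; eauto).
  assert (Hpk : forall D : I -> Prop, (forall x, D x -> D2 x) ->
     forall X Y, (forall x, In x X -> D x) -> (forall y, In y Y -> D y) -> Complete X Y).
  { intros D HD X Y HX HY. apply IHL. apply all_D2_mlt. intros k Hk.
    apply in_app_or in Hk. destruct Hk as [Hk|Hk]; apply lexmax_incl in Hk; apply HD; auto. }
  assert (Ca : forall x y, below gt alpha x -> lt y x -> below gt alpha y)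
    by (unfold below, lt; eauto).
  assert (Cb : forall x y, below gt beta x -> lt y x -> below gt beta y)
    by (unfold below, lt; eauto).
  assert (Cab : forall x y, below2 gt alpha beta x -> lt y x -> below2 gt alpha beta y)
    by (unfold below2, lt; intros x y [H|H] Hl; eauto).
  destruct (VAL _ Ca (Hpk _ (fun x H => or_introl H)) _ _ H1) as [f1 [U1 [V1 [HU1 [HV1 [DU1 DV1]]]]]].
  destruct (VAL _ Cab (Hpk _ (fun x H => H)) _ _ H2) as [f2 [U2 [V2 [HU2 [HV2 [DU2 DV2]]]]]].
  destruct (VAL _ Cb (Hpk _ (fun x H => or_intror H)) _ _ H3) as [f3 [U3 [V3 [HU3 [HV3 [DU3 DV3]]]]]].
  destruct (rrefl_chain R2 beta e1 e2 HB) as [B [HBB HBc]].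
  destruct (rrefl_chain R1 alpha e4 e3 HA) as [Aa [HAA HAc]].
  destruct (IHL V1 (B ++ U2) (MS alpha beta V1 B U2 DV1 HBB DU2) e1 f1 f2 HV1 (chain_app _ _ _ _ _ _ HBc HU2))
    as [h1 [V4 [U4 [HU4 [HV4 Inv1]]]]].
  assert (Hm2 : mlt (meas (Aa ++ V2) U3) [alpha; beta]).
  { unfold meas. eapply mlt_perm; [apply Permutation_app_comm| |apply (MS beta alpha U3 Aa V2 DU3 HAA)].
    - constructor.
    - intros x Hx; destruct (DV2 x Hx); auto. }
  destruct (IHL (Aa ++ V2) U3 Hm2 e4 f2 f3 (chain_app _ _ _ _ _ _ HAc HV2) HU3)
    as [h2 [V5 [U5 [HU5 [HV5 Inv2]]]]].
  assert (DV4 : forall x, In x V4 -> D2 x).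
  { intros z Hz. destruct (inv_bound _ _ _ (proj2 Inv1) z Hz) as [[y [Hy Hl]]|[w [Hw [<-|Hl]]]].
    - apply in_app_or in Hy. destruct Hy as [Hy|Hy].
      + destruct HBB; subst B; simpl in Hy; [tauto|]. destruct Hy as [<-|[]]. right; auto.
      + eapply HD2c; [apply DU2|]; eauto.
    - left; apply DV1; auto.
    - left; eapply lt_trans; [exact Hl| apply DV1; auto]. }
  assert (DU5 : forall x, In x U5 -> D2 x).
  { intros z Hz. destruct (inv_bound _ _ _ (proj1 Inv2) z Hz) as [[y [Hy Hl]]|[w [Hw [<-|Hl]]]].
    - apply in_app_or in Hy. destruct Hy as [Hy|Hy].
      + destruct HAA; subst Aa; simpl in Hy; [tauto|]. destruct Hy as [<-|[]]. left; auto.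
      + eapply HD2c; [apply DV2|]; eauto.
    - right; apply DU3; auto.
    - right; eapply lt_trans; [exact Hl| apply DU3; auto]. }
  destruct (Hpk D2 (fun x H => H) V4 U5 DV4 DU5 f2 h1 h2 HV4 HU5) as [d [V6 [U6 [HU6 [HV6 Inv3]]]]].
  destruct (inv_labels D2 _ _ _ _ HD2c Inv3 DV4 DU5) as [DV6 DU6].
  exists d, (U1 ++ U4 ++ U6), (V3 ++ V5 ++ V6). split; [|split; [|split]].
  - eapply chain_app; eauto. eapply chain_app; eauto.
  - eapply chain_app; eauto. eapply chain_app; eauto.
  - apply (LemL alpha beta U1 U4 U6 V1 B U2); auto. exact (proj1 Inv1).
  - apply (LemL beta alpha V3 V5 V6 U3 Aa V2); auto.
    + exact (proj2 Inv2).
    + intros x Hx; destruct (DV2 x Hx); auto.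
    + intros x Hx; destruct (DV6 x Hx); auto.
Qed.
Lemma MC : forall X Y, Complete X Y.
Proof.
  intros X Y. remember (meas X Y) as m eqn:Hm. revert X Y Hm.
  induction m as [m IH] using (well_founded_induction mlt_wf).
  intros X Y -> a b c HX HY.
  assert (IHm : forall X' Y', mlt (meas X' Y') (meas X Y) -> Complete X' Y')
    by (intros X' Y' H; eapply IH; eauto).
  clear IH.
  destruct X as [|alpha X1].
  { simpl in HX; subst b. exists c, [], Y. simpl; repeat split; auto.
    - rewrite keep_down_nil. apply mle_refl.
    - apply mle_refl. }
  destruct Y as [|beta Y1].
  { simpl in HY; subst c. exists b, (alpha :: X1), []. simpl; repeat split; auto.
    - apply mle_refl.
    - rewrite keep_down_nil. apply mle_refl. }
  destruct HX as [a1 [Ha1 HX1]]. destruct HY as [c1 [Hc1 HY1]].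
  assert (Hab : mle [alpha; beta] (meas (alpha :: X1) (beta :: Y1))).
  { unfold meas. rewrite !lexmax_cons.
    eapply mle_perm; [apply Permutation_refl| |apply (mle_app_r [alpha; beta]
      (keep (down [alpha]) (lexmax X1) ++ keep (down [beta]) (lexmax Y1)))].
    simpl. constructor. apply Permutation_middle. }
  destruct (StepL alpha beta a1 c1 (Hdec _ _ _ _ _ Ha1 Hc1)) as [g [P [Q [HP [HQ [h0 h0']]]]]].
  { intros X' Y' H. apply IHm. eapply mlt_mle_trans; eauto. }
  destruct (IHm X1 P (Meas2 alpha beta X1 Y1 P h0) a1 b g HX1 HP) as [h [X1' [P' [HP' [HX1' [h1 h5]]]]]].
  assert (Hm3 : mlt (meas Q Y1) (meas (alpha :: X1) (beta :: Y1))).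
  { unfold meas. eapply mlt_perm; [apply Permutation_app_comm|apply Permutation_app_comm|].
    apply (Meas2 beta alpha Y1 X1 Q h0'). }
  destruct (IHm Q Y1 Hm3 c1 g c HQ HY1) as [k [Q' [Y1' [HY1' [HQ' [h4 h1']]]]]].
  destruct (IHm X1' Y1' (Meas4 alpha beta X1 Y1 P Q X1' Y1' h0 h0' h5 h4) g h k HX1' HY1')
    as [d [X2 [Y2 [HY2 [HX2 [h3 h3']]]]]].
  exists d, (Q' ++ X2), (P' ++ Y2). split; [|split; [|split]].
  - eapply chain_app; eauto.
  - eapply chain_app; eauto.
  - apply (LemC alpha beta X1 Y1 P P' X1' Y1' Y2 Q); auto.
  - apply (LemC beta alpha Y1 X1 Q Q' Y1' X1' X2 P); auto.
Qed.

Lemma rt_chain (R : I -> A -> A -> Prop) a b :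
  clos_refl_trans A (ars_union R) a b -> exists X, chain R X a b.
Proof.
  induction 1 as [x y [g H]| x | x y z _ [X1 H1] _ [X2 H2]].
  - exists [g]; simpl; eauto.
  - exists []; simpl; auto.
  - exists (X1 ++ X2); eapply chain_app; eauto.
Qed.

Lemma chain_rt (R : I -> A -> A -> Prop) X a b :
  chain R X a b -> clos_refl_trans A (ars_union R) a b.
Proof.
  revert a. induction X as [|x X IH]; simpl; intros a H.
  - subst; apply rt_refl.
  - destruct H as [e [He H]]. eapply rt_trans; [apply rt_step; exists x; eauto| eauto].
Qed.

Lemma MAIN : ars_commute R1 R2.
Proof.
  intros a b c Hb Hc.
  destruct (rt_chain _ _ _ Hb) as [X HX]. destruct (rt_chain _ _ _ Hc) as [Y HY].
  destruct (MC X Y a b c HX HY) as [d [X' [Y' [HY' [HX' _]]]]].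
  exists d; split; eapply chain_rt; eauto.
Qed.
End Dev.

Definition liftR {I A : Type} (bot : I) (R : ARS I A) : ARS I A :=
  fun g x y => (g = bot /\ clos_refl_trans A (R bot) x y) \/ (g <> bot /\ R g x y).

Lemma conv_mono {I A : Type} (R1 R2 R1' R2' : ARS I A) (K K' : I -> Prop) :
  (forall g, K g -> K' g) -> (forall g x y, R1 g x y -> R1' g x y) ->
  (forall g x y, R2 g x y -> R2' g x y) ->
  forall x y, clos_refl_trans A (conv_K R1 R2 K) x y -> clos_refl_trans A (conv_K R1' R2' K') x y.
Proof.
  intros HK H1 H2. induction 1 as [x y [g [Hg [H|H]]]| |].
  - apply rt_step. exists g; split; auto.
  - apply rt_step. exists g; split; auto.
  - apply rt_refl.
  - eapply rt_trans; eauto.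
Qed.

Theorem theorem6 (I A : Type) (R1 R2 : ARS I A) (gt : I -> I -> Prop) (bot : I)
  (gt_irrefl : forall x, ~ gt x x)
  (gt_trans : forall x y z, gt x y -> gt y z -> gt x z)
  (gt_wf : well_founded (fun x y => gt y x))
  (bot_least : forall x, x <> bot -> gt x bot)
  (Hbot : commute (R1 bot) (R2 bot))
  (Hdec : forall alpha beta a b c,
      ~ (alpha = bot /\ beta = bot) ->
      R1 alpha a b -> R2 beta a c ->
      decreasing_peak gt R1 R2 alpha beta b c) :
  ars_commute R1 R2.
Proof.
  set (R1' := liftR bot R1). set (R2' := liftR bot R2).
  assert (Hnb : forall g, ~ gt bot g).
  { intros g H. destruct (classic (g = bot)) as [->|Hg]; [eapply gt_irrefl; eauto|].
    apply (gt_irrefl bot). eapply gt_trans; eauto. }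
  assert (S1 : forall g x y, R1 g x y -> R1' g x y).
  { intros g x y H. destruct (classic (g = bot)) as [->|Hg]; [left; split; auto; apply rt_step; auto| right; auto]. }
  assert (S2 : forall g x y, R2 g x y -> R2' g x y).
  { intros g x y H. destruct (classic (g = bot)) as [->|Hg]; [left; split; auto; apply rt_step; auto| right; auto]. }
  assert (Hempty : forall x y, clos_refl_trans A (conv_K R1 R2 (below gt bot)) x y -> x = y).
  { induction 1 as [x y [g [Hg _]]| |]; [exfalso; eapply Hnb; eauto| auto| congruence]. }
  assert (Lift2 : forall K : I -> Prop, K bot -> forall x y, clos_refl_trans_1n A (R2 bot) x y ->
     clos_refl_trans A (conv_K R1' R2' K) x y).
  { intros K HK x y H. induction H as [x|x y z Hxy _ IH2]; [apply rt_refl|].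
    eapply rt_trans; [|exact IH2]. apply rt_step. exists bot. split; [auto|].
    right. left. split; auto. apply rt_step; auto. }
  assert (Lift1 : forall K : I -> Prop, K bot -> forall x y, clos_refl_trans_1n A (R1 bot) x y ->
     clos_refl_trans A (conv_K R1' R2' K) y x).
  { intros K HK x y H. induction H as [x|x y z Hxy _ IH2]; [apply rt_refl|].
    eapply rt_trans; [exact IH2|]. apply rt_step. exists bot. split; [auto|].
    left. left. split; auto. apply rt_step; auto. }
  assert (HLA : forall alpha, alpha <> bot -> forall a c, clos_refl_trans_1n A (R2 bot) a c ->
     forall b, R1 alpha a b -> exists e, clos_refl_trans A (conv_K R1' R2' (below gt alpha)) b e /\
       rrefl (R1' alpha) c e).
  { intros alpha Ha a c Hac. induction Hac as [a|a a' c Haa' Ha'c IH]; intros b Hab.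
    - exists b. split; [apply rt_refl| right; right; auto].
    - destruct (Hdec alpha bot a b a') as [e1 [H1 [e2 [HB [e3 [H2 [e4 [HA H3]]]]]]]]; auto.
      { intros [? _]; auto. }
      apply Hempty in H3. subst e4.
      assert (Hbe3 : clos_refl_trans A (conv_K R1' R2' (below gt alpha)) b e3).
      { eapply rt_trans; [eapply conv_mono; [| exact S1 | exact S2 | exact H1]; auto|].
        eapply rt_trans.
        - destruct HB as [<-|HB]; [apply rt_refl|]. apply rt_step. exists bot. split.
          + apply bot_least; auto.
          + right. left. split; auto. apply rt_step; auto.
        - eapply conv_mono; [| exact S1 | exact S2 | exact H2].
          intros g [Hg|Hg]; [auto| exfalso; eapply Hnb; eauto]. }
      destruct HA as [<-|HA].
      + exists c. split; [|left; auto]. eapply rt_trans; [exact Hbe3|].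
        apply Lift2; auto. apply bot_least; auto.
      + destruct (IH e3 HA) as [e [He Hce]]. exists e. split; auto. eapply rt_trans; eauto. }
  assert (HLB : forall beta, beta <> bot -> forall a b, clos_refl_trans_1n A (R1 bot) a b ->
     forall c, R2 beta a c -> exists e, rrefl (R2' beta) b e /\
       clos_refl_trans A (conv_K R1' R2' (below gt beta)) e c).
  { intros beta Hb a b Hab. induction Hab as [a|a a' b Haa' Ha'b IH]; intros c Hac.
    - exists c. split; [right; right; auto| apply rt_refl].
    - destruct (Hdec bot beta a a' c) as [e1 [H1 [e2 [HB [e3 [H2 [e4 [HA H3]]]]]]]]; auto.
      { intros [_ ?]; auto. }
      apply Hempty in H1. subst e1.
      assert (He2c : clos_refl_trans A (conv_K R1' R2' (below gt beta)) e2 c).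
      { eapply rt_trans; [eapply conv_mono; [| exact S1 | exact S2 | exact H2]|].
        { intros g [Hg|Hg]; [exfalso; eapply Hnb; eauto| auto]. }
        eapply rt_trans; [|eapply conv_mono; [| exact S1 | exact S2 | exact H3]; auto].
        destruct HA as [<-|HA]; [apply rt_refl|]. apply rt_step. exists bot. split.
        - apply bot_least; auto.
        - left. left. split; auto. apply rt_step; auto. }
      destruct HB as [<-|HB].
      + exists b. split; [left; auto|]. eapply rt_trans; [|exact He2c].
        apply Lift1; auto. apply bot_least; auto.
      + destruct (IH e2 HB) as [e [He Hec]]. exists e. split; auto. eapply rt_trans; eauto. }
  assert (DEC : forall alpha beta a b c, R1' alpha a b -> R2' beta a c ->
      decreasing_peak gt R1' R2' alpha beta b c).
  { intros alpha beta a b c [[-> Hb]|[Ha Hb]] [[-> Hc]|[Hb' Hc]].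
    - destruct (Hbot a b c Hb Hc) as [d [Hbd Hcd]].
      exists b; split; [apply rt_refl|]. exists d; split; [right; left; auto|].
      exists d; split; [apply rt_refl|]. exists c; split; [right; left; auto| apply rt_refl].
    - apply clos_rt_rt1n in Hb.
      destruct (HLB beta Hb' a b Hb c Hc) as [e [H1 H2]].
      exists b; split; [apply rt_refl|]. exists e; split; auto.
      exists e; split; [apply rt_refl|]. exists e; split; [left; auto| auto].
    - apply clos_rt_rt1n in Hc.
      destruct (HLA alpha Ha a c Hc b Hb) as [e [H1 H2]].
      exists e; split; auto. exists e; split; [left; auto|].
      exists e; split; [apply rt_refl|]. exists c; split; [auto| apply rt_refl].
    - destruct (Hdec alpha beta a b c) as [e1 [H1 [e2 [HB [e3 [H2 [e4 [HA H3]]]]]]]]; auto.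
      { intros [? _]; auto. }
      exists e1; split; [eapply conv_mono; [| exact S1 | exact S2 | exact H1]; auto|].
      exists e2; split; [destruct HB as [<-|HB]; [left; auto| right; auto]|].
      exists e3; split; [eapply conv_mono; [| exact S1 | exact S2 | exact H2]; auto|].
      exists e4; split; [destruct HA as [<-|HA]; [left; auto| right; auto]|].
      eapply conv_mono; [| exact S1 | exact S2 | exact H3]; auto. }
  assert (HM := MAIN I gt gt_trans gt_wf A R1' R2' DEC).
  assert (Up : forall (R R' : ARS I A), (forall g x y, R g x y -> R' g x y) ->
     forall x y, clos_refl_trans A (ars_union R) x y -> clos_refl_trans A (ars_union R') x y).
  { intros R R' HR. induction 1 as [x y [g H]| |]; [apply rt_step; exists g; auto| apply rt_refl| eapply rt_trans; eauto]. }
  assert (Down : forall (R : ARS I A) x y, clos_refl_trans A (ars_union (liftR bot R)) x y ->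
     clos_refl_trans A (ars_union R) x y).
  { intros R. induction 1 as [x y [g [[-> H]|[_ H]]]| |].
    - clear -H. induction H as [x y H| |]; [apply rt_step; exists bot; auto| apply rt_refl| eapply rt_trans; eauto].
    - apply rt_step; exists g; auto.
    - apply rt_refl.
    - eapply rt_trans; eauto. }
  intros a b c Hb Hc.
  destruct (HM a b c (Up _ _ S1 _ _ Hb) (Up _ _ S2 _ _ Hc)) as [d [Hbd Hcd]].
  exists d; split; apply Down; auto.
Qed.
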